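(* Let $\mathbf{C}$ be a covering of a finite nonempty set $U$ such that every $x\in U$ has a core block in $\mathbf{C}$. If $K\in\mathbf{C}$ is not a core block of any element of $U$, then $K$ is a reducible element of $\mathbf{C}$.
   Context: A covering of $U$ is a family (set) $\mathbf{C}$ of subsets of $U$ with $\emptyset\notin\mathbf{C}$ and $\bigcup\mathbf{C}=U$; its elements are called blocks. The membership repeat degree of $x\in U$ is $\partial(x)=|\{K\in\mathbf{C}: x\in K\}|$. The common block repeat degree of $(x,y)\in U\times U$ is $\lambda(x,y)=|\{K\in\mathbf{C}: \{x,y\}\subseteq K\}|$. A block $K\in\mathbf{C}$ is a core block of $x\in U$ if $x\in K$ and $\lambda(x,y)=\partial(x)$ for every $y\in K$. A block $K\in\mathbf{C}$ is a reducible element of $\mathbf{C}$ if $K$ is the union of some subfamily of $\mathbf{C}\setminus\{K\}$; otherwise it is irreducible. *)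

(* Defs.v *)
From mathcomp Require Import all_boot.
Set Implicit Arguments. Unset Strict Implicit. Unset Printing Implicit Defensive.

Definition is_covering (T : finType) (U : {set T}) (C : {set {set T}}) : Prop :=
  [/\ (forall K : {set T}, K \in C -> K \subset U), set0 \notin C & cover C = U].

Definition mrd (T : finType) (C : {set {set T}}) (x : T) : nat :=
  #|[set K in C | x \in K]|.

Definition cbrd (T : finType) (C : {set {set T}}) (x y : T) : nat :=
  #|[set K in C | (x \in K) && (y \in K)]|.

Definition core_block (T : finType) (C : {set {set T}}) (x : T) (K : {set T}) : Prop :=
  [/\ K \in C, x \in K & forall y, y \in K -> cbrd C x y = mrd C x].

Definition reducible (T : finType) (C : {set {set T}}) (K : {set T}) : Prop :=
  K \in C /\ exists F : {set {set T}}, F \subset C :\ K /\ cover F = K.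

(* Main.v *)
Require Import Defs.
From mathcomp Require Import all_boot.

Lemma core_sub (T : finType) (C : {set {set T}}) x B K :
  core_block C x B -> K \in C -> x \in K -> B \subset K.
Proof.
case=> _ _ H KC xK; apply/subsetP=> y yB.
have := H y yB; rewrite /cbrd /mrd => E.
have S : [set K0 in C | (x \in K0) && (y \in K0)] \subset [set K0 in C | x \in K0].
  by apply/subsetP=> z; rewrite !inE => /and3P[-> -> _].
have [_] := subset_leqif_cards S; rewrite E eqxx => /esym /eqP S2.
have : K \in [set K0 in C | x \in K0] by rewrite inE KC xK.
by rewrite -S2 !inE => /and3P[].
Qed.

Theorem proposition18 (T : finType) (U : {set T}) (C : {set {set T}}) :
  U != set0 ->
  is_covering U C ->
  (forall x, x \in U -> exists K, core_block C x K) ->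
  forall K, K \in C ->
  (forall x, x \in U -> ~ core_block C x K) ->
  reducible C K.
Proof.
move=> _ [sub _ _] Hc K KC Hn; split=> //.
exists [set B in C :\ K | B \subset K]; split.
  by apply/subsetP=> B; rewrite inE => /andP[].
apply/eqP; rewrite eqEsubset; apply/andP; split.
  by apply/bigcupsP=> B; rewrite inE => /andP[].
apply/subsetP=> x xK.
have xU : x \in U by apply: (subsetP (sub K KC)).
have [B cB] := Hc x xU.
have BK := @core_sub _ C x B K cB KC xK.
case: (cB) => BC xB _.
apply/bigcupP; exists B => //.
rewrite !inE BC BK andbT andbT.
by apply/eqP=> E; apply: (Hn x xU); rewrite -E.
Qed.
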